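(* Let $\{x_k\}$ be generated by the Subgradient-InexP method with the exogenous stepsize rule, under the standing assumptions, and let $\Omega:=\{x\in C: f(x)\le\inf_k f(x_k)\}$. If $\Omega\neq\varnothing$, then $\{x_k\}$ is quasi-Fejér convergent to $\Omega$; consequently $\{x_k\}$ is bounded.
   Context: A sequence $\{y_k\}\subset\mathbb{R}^n$ is quasi-Fejér convergent to a nonempty set $W$ if for every $w\in W$ there is $\{\delta_k\}$ with $\delta_k\ge0$, $\sum_k\delta_k<\infty$, and $\|y_{k+1}-w\|^2\le\|y_k-w\|^2+\delta_k$ for all $k$. Problem: minimize a convex $f:\mathbb{R}^n\to\mathbb{R}$ over a nonempty closed convex $C\subset\mathbb{R}^n$. For $\epsilon\ge0$, $\partial_\epsilon f(x):=\{s: f(y)\ge f(x)+\langle s,y-x\rangle-\epsilon\ \forall y\}$. Relative error tolerance function: any $\varphi_{\gamma,\theta,\lambda}:(\mathbb{R}^n)^3\to[0,\infty)$ with $\varphi_{\gamma,\theta,\lambda}(u,v,w)\le\gamma\|v-u\|^2+\theta\|w-v\|^2+\lambda\|w-u\|^2$; for $u\in C$, $\mathcal{P}_C(\varphi_{\gamma,\theta,\lambda},u,v):=\{w\in C:\langle v-w,z-w\rangle\le\varphi_{\gamma,\theta,\lambda}(u,v,w)\ \forall z\in C\}$. Subgradient-InexP method: $x_0\in C$; at iteration $k$, if $0\in\partial f(x_k)$ stop; otherwise choose nonzero $s_k\in\partial_{\epsilon_k}f(x_k)$, stepsize $t_k>0$, and $x_{k+1}\in\mathcal{P}_C(\varphi_{\gamma_k,\theta_k,\lambda_k},x_k,x_k-t_ks_k)$.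 Standing assumptions: $\gamma_k\in[0,\bar\gamma)$, $\theta_k\in[0,\bar\theta)$, $\lambda_k\in[0,\bar\lambda)$ with $\bar\gamma\ge0$, $\bar\theta,\bar\lambda\in[0,1/2)$; the sequence is infinite. Exogenous stepsize rule: $\mu\ge0$; $\{\alpha_k\}$, $\{\epsilon_k\}$ nonnegative, $\{\epsilon_k\}$ nonincreasing, $\sum_k\alpha_k=+\infty$, $\sum_k\alpha_k^2<+\infty$, $\epsilon_k\le\mu\alpha_k$; $t_k:=\alpha_k/\eta_k$, $\eta_k:=\max\{1,\|s_k\|\}$. *)

(* Defs.v *)
From HB Require Import structures.
From mathcomp Require Import all_boot all_order all_algebra.
From mathcomp Require Import all_classical all_reals all_analysis.
Set Implicit Arguments. Unset Strict Implicit. Unset Printing Implicit Defensive.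
Import Order.TTheory GRing.Theory Num.Theory.
Import numFieldNormedType.Exports.
Local Open Scope classical_set_scope.
Local Open Scope ring_scope.

Section Defs.
Variables (R : realType) (n : nat).
Notation vec := 'rV[R]_n.

Definition dotv (u v : vec) : R := \sum_(i < n) u ord0 i * v ord0 i.
Definition enorm2 (u : vec) : R := dotv u u.
Definition enorm (u : vec) : R := Num.sqrt (enorm2 u).

Definition convex_fun (f : vec -> R) : Prop :=
  forall (x y : vec) (l : R), 0 <= l -> l <= 1 ->
    f (l *: x + (1 - l) *: y) <= l * f x + (1 - l) * f y.

Definition convex_set_Rn (C : set vec) : Prop :=
  forall (x y : vec) (l : R), C x -> C y -> 0 <= l -> l <= 1 ->
    C (l *: x + (1 - l) *: y).

Definition eps_subdiff (f : vec -> R) (eps : R) (x : vec) : set vec :=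
  [set s | forall y : vec, f y >= f x + dotv s (y - x) - eps].
Definition subdiff (f : vec -> R) (x : vec) : set vec := eps_subdiff f 0 x.

Definition rel_err_tol (g th la : R) (phi : vec -> vec -> vec -> R) : Prop :=
  forall u v w : vec, 0 <= phi u v w /\
    phi u v w <= g * enorm2 (v - u) + th * enorm2 (w - v) + la * enorm2 (w - u).

Definition inexP (C : set vec) (phi : vec -> vec -> vec -> R) (u v : vec)
  : set vec :=
  [set w | C w /\ forall z : vec, C z -> dotv (v - w) (z - w) <= phi u v w].

Definition quasi_fejer (y : nat -> vec) (W : set vec) : Prop :=
  forall w : vec, W w ->
    exists delta : R ^nat, (forall k, 0 <= delta k) /\ cvgn (series delta) /\
      forall k, enorm2 (y k.+1 - w) <= enorm2 (y k - w) + delta k.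

Definition bounded_seq (y : nat -> vec) : Prop :=
  exists M : R, forall k, enorm (y k) <= M.

End Defs.

(* Main.v *)
Require Import Defs.
From HB Require Import structures.
From mathcomp Require Import all_boot all_order all_algebra.
From mathcomp Require Import all_classical all_reals all_analysis.
From mathcomp Require Import ring lra.
Import Order.TTheory GRing.Theory Num.Theory.
Import numFieldNormedType.Exports.
Local Open Scope classical_set_scope.
Local Open Scope ring_scope.
Lemma key (R : realType) (D X Y F T al ga th la ph mu gb tb lb : R) :
  0 <= D -> 0 <= X -> X <= al ^+ 2 ->
  (forall r, 0 <= D + 2 * r * Y + r ^+ 2 * X) ->
  - T <= mu * al ^+ 2 ->
  D + F + Y + T <= ph -> D + Y <= ph ->
  ph <= ga * X + th * (D + 2 * Y + X) + la * D ->
  0 <= ga -> ga < gb -> 0 <= th -> th < tb -> tb < 1/2 -> 0 <= la -> la < lb -> lb < 1/2 ->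
  D + 2 * F <= (2 * gb + 2 * tb + 1 + 2 * (2 * (gb + tb) / (1 - tb - lb) + 1 / (1 - tb - lb) ^+ 2) + 2 * mu) * al ^+ 2.
Proof.
move=> D0 X0 Xal Hq HT Hw Hx Hph ga0 gab th0 thb tb2 la0 lab lb2.
set a0 := 1 - tb - lb.
have a0p : 0 < a0 by rewrite /a0; lra.
set b := 1 - 2 * th.
have b0 : 0 <= b by rewrite /b; lra.
have b1 : b <= 1 by rewrite /b; lra.
have h1 : a0 * D <= (ga + th) * X - b * Y.
  have : (1 - th - la) * D <= (ga + th) * X - b * Y by rewrite /b; nra.
  have : a0 * D <= (1 - th - la) * D by apply: ler_wpM2r => //; rewrite /a0; lra.
  lra.
have h2 : - (b * Y) <= (a0 / 2) * D + (1 / (2 * a0)) * X.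
  have := Hq (b / a0).
  have hb2 : b ^+ 2 <= 1 by nra.
  have : (b / a0) ^+ 2 * X <= (1 / a0 ^+ 2) * X.
    apply: ler_wpM2r => //; rewrite expr_div_n; apply: ler_wpM2r => //; rewrite invr_ge0 exprn_ge0 //; lra.
  move=> h3 h4.
  have h5 : 0 <= a0 / 2 * (D + 2 * (b / a0) * Y + (b / a0) ^+ 2 * X) by apply: mulr_ge0 => //; lra.
  have e1 : a0 / 2 * (D + 2 * (b / a0) * Y + (b / a0) ^+ 2 * X) = a0 / 2 * D + b * Y + (b ^+ 2 / (2 * a0)) * X.
    by field; rewrite gt_eqF.
  have e2 : (b ^+ 2 / (2 * a0)) * X <= (1 / (2 * a0)) * X.
    apply: ler_wpM2r => //; apply: ler_wpM2r => //; rewrite invr_ge0; lra.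
  lra.
have hD : D <= (2 * (gb + tb) / a0 + 1 / a0 ^+ 2) * X.
  have h6 : (ga + th) * X <= (gb + tb) * X by apply: ler_wpM2r => //; lra.
  have h7 : a0 / 2 * D <= (gb + tb) * X + (1 / (2 * a0)) * X by lra.
  have e : (2 * (gb + tb) / a0 + 1 / a0 ^+ 2) * X = 2 / a0 * ((gb + tb) * X + (1 / (2 * a0)) * X).
    by field; rewrite gt_eqF.
  rewrite e.
  have -> : D = 2 / a0 * (a0 / 2 * D) by field; rewrite gt_eqF.
  apply: ler_wpM2l => //; rewrite divr_ge0 //; lra.
have h8 : - (2 * b * Y) <= D + X.
  have := Hq b.
  have hb2 : b ^+ 2 <= 1 by nra.
  have : b ^+ 2 * X <= X by rewrite -[leRHS]mul1r; apply: ler_wpM2r.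
  lra.
set K1 := 2 * (gb + tb) / a0 + 1 / a0 ^+ 2.
have K10 : 0 <= K1 by rewrite /K1 addr_ge0 // divr_ge0 //; try lra; rewrite exprn_ge0 //; lra.
have hX : (2 * ga + 2 * th) * X <= (2 * gb + 2 * tb) * X by apply: ler_wpM2r => //; lra.
have hDD : (2 * th + 2 * la - 1) * D <= D by nra.
have hK : (2 * gb + 2 * tb + 1 + 2 * K1) * X <= (2 * gb + 2 * tb + 1 + 2 * K1) * al ^+ 2.
  apply: ler_wpM2l => //; lra.
have hm : 2 * mu * al ^+2 = 2 * (mu * al ^+ 2) by ring.
have : D + 2 * F <= 2 * ph - D - 2 * Y + 2 * (mu * al ^+ 2) by lra.
have : 2 * ph - D - 2 * Y <= (2 * ga + 2 * th) * X + (2 * th + 2 * la - 1) * D - 2 * b * Y.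
  rewrite /b; nra.
move: hD; rewrite -/K1 => hD.
have : (2 * gb + 2 * tb + 1 + 2 * K1 + 2 * mu) * al ^+ 2 = (2 * gb + 2 * tb + 1 + 2 * K1) * al ^+ 2 + 2 * (mu * al ^+ 2) by ring.
lra.
Qed.

Lemma dotvC {R : realType} {n : nat} (u v : 'rV[R]_n) : dotv u v = dotv v u.
Proof. by rewrite /dotv; apply: eq_bigr => i _; rewrite mulrC. Qed.

Lemma dotvDl {R : realType} {n : nat} (u v z : 'rV[R]_n) :
  dotv (u + v) z = dotv u z + dotv v z.
Proof. by rewrite /dotv -big_split; apply: eq_bigr => i _; rewrite !mxE mulrDl. Qed.

Lemma dotvZl {R : realType} {n : nat} (a : R) (u z : 'rV[R]_n) :
  dotv (a *: u) z = a * dotv u z.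
Proof. by rewrite /dotv mulr_sumr; apply: eq_bigr => i _; rewrite !mxE mulrA. Qed.

Lemma dotvNl {R : realType} {n : nat} (u z : 'rV[R]_n) :
  dotv (- u) z = - dotv u z.
Proof. by rewrite -scaleN1r dotvZl mulN1r. Qed.

Lemma dotvDr {R : realType} {n : nat} (u v z : 'rV[R]_n) :
  dotv z (u + v) = dotv z u + dotv z v.
Proof. by rewrite dotvC dotvDl !(dotvC z). Qed.

Lemma dotvZr {R : realType} {n : nat} (a : R) (u z : 'rV[R]_n) :
  dotv z (a *: u) = a * dotv z u.
Proof. by rewrite dotvC dotvZl (dotvC u). Qed.

Lemma dotvNr {R : realType} {n : nat} (u z : 'rV[R]_n) :
  dotv z (- u) = - dotv z u.
Proof. by rewrite dotvC dotvNl (dotvC u). Qed.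

Lemma dotv_ge0 {R : realType} {n : nat} (u : 'rV[R]_n) : 0 <= dotv u u.
Proof. by rewrite /dotv sumr_ge0 // => i _; rewrite -expr2 sqr_ge0. Qed.
Lemma max1P (R : realType) (a : R) : 1 <= Num.max 1 a /\ a <= Num.max 1 a.
Proof. by rewrite maxEle; case: (leP 1 a) => h //; split => //; apply: ltW. Qed.

Theorem mainTheorem4 (R : realType) (n : nat)
  (f : 'rV[R]_n -> R) (C : set 'rV[R]_n)
  (x s : nat -> 'rV[R]_n) (t eps alpha eta gamma theta lambda : nat -> R)
  (phi : nat -> 'rV[R]_n -> 'rV[R]_n -> 'rV[R]_n -> R)
  (gbar tbar lbar mu : R) :
  (* problem data *)
  convex_fun f -> closed C -> convex_set_Rn C -> C !=set0 ->
  (* standing assumptions *)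
  0 <= gbar -> 0 <= tbar -> tbar < 1 / 2 -> 0 <= lbar -> lbar < 1 / 2 ->
  (forall k, 0 <= gamma k /\ gamma k < gbar) ->
  (forall k, 0 <= theta k /\ theta k < tbar) ->
  (forall k, 0 <= lambda k /\ lambda k < lbar) ->
  (forall k, rel_err_tol (gamma k) (theta k) (lambda k) (phi k)) ->
  (* Subgradient-InexP iteration (infinite sequence: never stops) *)
  C (x 0) ->
  (forall k, ~ subdiff f (x k) 0) ->
  (forall k, s k != 0 /\ eps_subdiff f (eps k) (x k) (s k)) ->
  (forall k, 0 < t k) ->
  (forall k, inexP C (phi k) (x k) (x k - t k *: s k) (x k.+1)) ->
  (* exogenous stepsize rule *)
  0 <= mu ->
  (forall k, 0 <= alpha k) -> (forall k, 0 <= eps k) ->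
  (forall k, eps k.+1 <= eps k) ->
  series alpha @ \oo --> +oo ->
  cvgn (series (fun k => alpha k ^+ 2)) ->
  (forall k, eps k <= mu * alpha k) ->
  (forall k, eta k = Num.max 1 (enorm (s k))) ->
  (forall k, t k = alpha k / eta k) ->
  (* conclusion *)
  let Omega := [set y | C y /\ forall k, f y <= f (x k)] in
  Omega !=set0 ->
  quasi_fejer x Omega /\ bounded_seq x.
Proof.
move=> _ _ _ _ gb0 tb0 tb2 lb0 lb2 hga hth hla hphi Cx0 _ hs ht0 hx mu0 al0 eps0 _ _ hsum heps heta ht Omega [w0 Ow0].
set a0 := 1 - gbar - lbar.
set K := 2 * gbar + 2 * tbar + 1 + 2 * (2 * (gbar + tbar) / (1 - tbar - lbar) + 1 / (1 - tbar - lbar) ^+ 2) + 2 * mu.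
have K0 : 0 <= K.
  have a0p : 0 < 1 - tbar - lbar by lra.
  rewrite /K; apply: addr_ge0; last by lra.
  apply: addr_ge0; first by lra.
  apply: mulr_ge0 => //; apply: addr_ge0; apply: divr_ge0; try lra.
  by rewrite exprn_ge0 // ltW.
have Cx : forall k, C (x k) by case=> [//|k]; case: (hx k).
have step : forall w, Omega w -> forall k,
    enorm2 (x k.+1 - w) <= enorm2 (x k - w) + K * alpha k ^+ 2.
  move=> w [Cw fw] k.
  set d := x k.+1 - x k; set e := x k - w; set sk := s k; set tk := t k.
  have eta1 : 1 <= eta k by rewrite heta; case: (max1P _ (enorm (s k))).
  have eta0 : 0 < eta k by lra.
  have tkal : tk <= alpha k.
    rewrite /tk ht ler_pdivrMr // -[leLHS]mulr1; apply: ler_wpM2l => //.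
  have tk0 : 0 < tk by exact: ht0.
  have hX : tk ^+ 2 * dotv sk sk <= alpha k ^+ 2.
    have S0 := dotv_ge0 sk.
    have hS : dotv sk sk <= eta k ^+ 2.
      rewrite heta; have -> : dotv sk sk = enorm sk ^+ 2 by rewrite /enorm sqr_sqrtr.
      have [m1 m2] := max1P _ (enorm (s k)).
      rewrite lerXn2r ?nnegrE //; last by lra.
      by rewrite /enorm sqrtr_ge0.
    rewrite /tk ht expr_div_n mulrAC ler_pdivrMr ?exprn_gt0 //.
    by apply: ler_wpM2l => //; rewrite exprn_ge0.
  have [Cxk1 hproj] := hx k.
  have [_ hphik] := hphi k (x k) (x k - t k *: s k) (x k.+1).
  have Hw := hproj w Cw.
  have Hx := hproj (x k) (Cx k).
  have v1 : x k - t k *: s k - x k.+1 = - (d + tk *: sk).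
    by apply/rowP => i; rewrite /d /e /tk /sk !mxE; ring.
  have v2 : w - x k.+1 = - (d + e) by apply/rowP => i; rewrite /d /e /tk /sk !mxE; ring.
  have v3 : x k - x k.+1 = - d by apply/rowP => i; rewrite /d /e /tk /sk !mxE; ring.
  have v4 : x k - t k *: s k - x k = - (tk *: sk) by apply/rowP => i; rewrite /d /e /tk /sk !mxE; ring.
  have v5 : x k.+1 - (x k - t k *: s k) = d + tk *: sk by apply/rowP => i; rewrite /d /e /tk /sk !mxE; ring.
  have v6 : x k.+1 - w = d + e by apply/rowP => i; rewrite /d /e /tk /sk !mxE; ring.
  rewrite v1 v2 in Hw; rewrite v1 v3 in Hx.
  rewrite /enorm2 v4 v5 -/d in hphik.
  have [_ hsub] := hs k.
  have hsw := hsub w.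
  have ew : w - x k = - e by apply/rowP => i; rewrite /d /e /tk /sk !mxE; ring.
  rewrite ew -/sk in hsw.
  rewrite /enorm2 v6.
  clearbody d e.
  have fw' := fw k.
  have hT : - (tk * dotv sk e) <= mu * alpha k ^+ 2.
    have h1 : - dotv sk e <= eps k by rewrite dotvNr in hsw; lra.
    have h2 : - (tk * dotv sk e) <= tk * eps k by rewrite -mulrN; apply: ler_wpM2l => //; lra.
    have h3 : tk * eps k <= alpha k * eps k by apply: ler_wpM2r.
    have h4 : alpha k * eps k <= alpha k * (mu * alpha k) by apply: ler_wpM2l.
    have : alpha k * (mu * alpha k) = mu * alpha k ^+ 2 by ring.
    lra.
  move: Hw Hx hphik.
  rewrite !(dotvNl, dotvNr, dotvDl, dotvDr, dotvZl, dotvZr, opprK).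
  rewrite ?(dotvC sk d) ?(dotvC e sk) ?(dotvC e d).
  move=> Hw Hx hphik.
  have hq : forall r : R, 0 <= dotv d d + 2 * r * (tk * dotv d sk) + r ^+ 2 * (tk ^+ 2 * dotv sk sk).
    move=> r; have := dotv_ge0 (d + (r * tk) *: sk).
    rewrite !(dotvDl, dotvDr, dotvZl, dotvZr) ?(dotvC sk d).
    move=> h; apply: le_trans h _; rewrite le_eqVlt; apply/orP; left; apply/eqP; ring.
  have [ga0 gab] := hga k; have [th0 thb] := hth k; have [la0 lab] := hla k.
  have := @key R (dotv d d) (tk ^+ 2 * dotv sk sk) (tk * dotv d sk) (dotv d e)
    (tk * dotv sk e) (alpha k) (gamma k) (theta k) (lambda k)
    (phi k (x k) (x k - t k *: s k) (x k.+1)) mu gbar tbar lbar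
    (dotv_ge0 d) (mulr_ge0 (exprn_ge0 2 (ltW tk0)) (dotv_ge0 sk)) hX hq hT.
  rewrite -/K => H.
  have : dotv d d + 2 * dotv d e <= K * alpha k ^+ 2.
    apply: H => //; rewrite ?(le_trans _ hphik) //; try lra.
  move=> h; rewrite ?(dotvC e d); lra.
set delta := fun k => K * alpha k ^+ 2.
have d0 : forall k, 0 <= delta k by move=> k; rewrite /delta mulr_ge0 // exprn_ge0.
have dc : cvgn (series delta).
  have -> : delta = K *: (fun k => alpha k ^+ 2) by apply/funext => k.
  exact: is_cvg_seriesZ.
have QF : quasi_fejer x Omega.
  by move=> w Ow; exists delta; split => //; split => //; exact: step.
split => //.
have bnd : forall k, enorm2 (x k - w0) <= enorm2 (x 0 - w0) + limn (series delta).
  have sle : forall k, series delta k <= limn (series delta).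
    apply: nondecreasing_cvgn_le => //.
    by apply: nondecreasing_series => m _ _; exact: d0.
  have : forall k, enorm2 (x k - w0) <= enorm2 (x 0 - w0) + series delta k.
    elim=> [|k IH]; first by rewrite /series /= big_geq // addr0.
    rewrite seriesSr; have := step w0 Ow0 k; rewrite -/delta /=; rewrite /delta; lra.
  by move=> h k; apply: le_trans (h k) _; rewrite lerD2l.
exists (Num.sqrt (2 * (enorm2 (x 0 - w0) + limn (series delta)) + 2 * enorm2 w0)) => k.
rewrite /enorm ler_sqrt; last first.
  apply: addr_ge0; last by rewrite mulr_ge0 // dotv_ge0.
  by apply: mulr_ge0 => //; apply: le_trans (bnd k); apply: dotv_ge0.
have key2 : forall u v : 'rV[R]_n, dotv (u + v) (u + v) <= 2 * dotv u u + 2 * dotv v v.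
  move=> u v; have := dotv_ge0 (u - v).
  rewrite !(dotvDl, dotvDr, dotvNl, dotvNr) (dotvC v u); lra.
have := key2 (x k - w0) w0; rewrite subrK => h.
have := bnd k; rewrite /enorm2 in h *; lra.
Qed.
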